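(* Let $S\subseteq\{0,1\}^n$ be the vertex set of an acute $0/1$-simplex in $[0,1]^n$ with $k$ vertices. If $\hat S$ is the vertex set of an acute $0/1$-simplex in $[0,1]^n$ having $\mathrm{conv}(S)$ as a facet (face), then each vertex of $\hat S$ belongs to $S$ or to $\mathcal{A}^n(S)$.
   Context: A set of $j+1$ affinely independent points $a_0,\dots,a_j\in\{0,1\}^n$ is the vertex set of an acute $0/1$-$j$-simplex if all dihedral angles of their convex hull are acute; equivalently, with $P=[a_1-a_0,\dots,a_j-a_0]$ and $G=P^\top P$, every off-diagonal entry of $G^{-1}$ is negative and every row sum of $G^{-1}$ is positive. For the vertex set $S$ of an acute $0/1$-simplex, $\mathcal{A}^n(S)$ is the set of all $v\in\{0,1\}^n$ such that $S\cup\{v\}$ is the vertex set of an acute $0/1$-simplex with one more vertex. Here a facet of a simplex means the convex hull of any nonempty subset of its vertices (a face of any dimension). *)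

(* Defs.v *)
(* Points of {0,1}^n are finite functions 'I_n -> bool;
   linear algebra is done over rat (all Gram matrices are integral). *)
From mathcomp Require Import all_boot all_order all_algebra.
Set Implicit Arguments. Unset Strict Implicit. Unset Printing Implicit Defensive.
Import Order.TTheory GRing.Theory Num.Theory.
Local Open Scope ring_scope.

Notation pt n := {ffun 'I_n -> bool}.

Definition edge_mx (n j : nat) (a : 'I_j.+1 -> pt n) : 'M[rat]_(n, j) :=
  \matrix_(i < n, l < j) (((a (lift ord0 l) i : nat)%:R) - ((a ord0 i : nat)%:R)).

Definition gram_mx (n j : nat) (a : 'I_j.+1 -> pt n) : 'M[rat]_j :=
  (edge_mx a)^T *m edge_mx a.

(* a_0..a_j are affinely independent (G invertible), every off-diagonal
   entry of G^{-1} is negative and every row sum of G^{-1} is positive. *)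
Definition acute_tuple (n j : nat) (a : 'I_j.+1 -> pt n) : Prop :=
  [/\ gram_mx a \in unitmx,
      (forall l m : 'I_j, l != m -> invmx (gram_mx a) l m < 0) &
      (forall l : 'I_j, 0 < \sum_(m < j) invmx (gram_mx a) l m)].

Definition acute_simplex (n : nat) (S : {set pt n}) : Prop :=
  exists (j : nat) (a : 'I_j.+1 -> pt n),
    [/\ injective a, S = [set a i | i in 'I_j.+1] & acute_tuple a].

Definition in_An (n : nat) (S : {set pt n}) (v : pt n) : Prop :=
  v \notin S /\ acute_simplex (v |: S).

(* Main.v *)
Require Import Defs.
From mathcomp Require Import all_boot all_order all_algebra.
From mathcomp Require Import ring lra perm.
Set Implicit Arguments. Unset Strict Implicit. Unset Printing Implicit Defensive.
Import Order.TTheory GRing.Theory Num.Theory.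
Local Open Scope ring_scope.

Lemma entry1 j (Q G : 'M[rat]_j) x y : Q *m G = 1%:M ->
  \sum_k Q x k * G k y = (x == y)%:R.
Proof. by move=> H; have := congr1 (fun M : 'M[rat]_j => M x y) H; rewrite !mxE. Qed.

Lemma del_inv j (G Q : 'M[rat]_j.+1) (p : 'I_j.+1) : Q *m G = 1%:M -> Q p p != 0 ->
 (\matrix_(l, m) (Q (lift p l) (lift p m) - Q (lift p l) p * Q p (lift p m) / Q p p))
   *m (\matrix_(l, m) G (lift p l) (lift p m)) = 1%:M.
Proof.
move=> QG Qp; apply/matrixP => l r; rewrite !mxE.
have H1 := entry1 (lift p l) (lift p r) QG.
have H2 := entry1 p (lift p r) QG.
rewrite (bigD1_ord p) //= in H1; rewrite (bigD1_ord p) //= in H2.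
rewrite eq_liftF /= in H2.
rewrite (inj_eq (@lift_inj _ p)) in H1.
transitivity (\sum_(k < j) Q (lift p l) (lift p k) * G (lift p k) (lift p r) -
   Q (lift p l) p / Q p p * \sum_(k < j) Q p (lift p k) * G (lift p k) (lift p r)).
  rewrite mulr_sumr -sumrB; apply: eq_bigr => k _; rewrite !mxE; ring.
have -> : \sum_(k < j) Q (lift p l) (lift p k) * G (lift p k) (lift p r) =
   (l == r)%:R - Q (lift p l) p * G p (lift p r) by rewrite -H1; ring.
have -> : \sum_(k < j) Q p (lift p k) * G (lift p k) (lift p r) =
   - (Q p p * G p (lift p r)) by apply: (addrI (Q p p * G p (lift p r))); rewrite H2; ring.
by field.
Qed.

Definition del n j (a : 'I_j.+2 -> pt n) (p : 'I_j.+1) : 'I_j.+1 -> pt n :=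
  fun k => a (lift (lift ord0 p) k).

Lemma lift_lift0 j (p : 'I_j.+1) : lift (lift ord0 p) ord0 = ord0 :> 'I_j.+2.
Proof. by apply: val_inj. Qed.

Lemma lift_lift1 j (p : 'I_j.+1) (l : 'I_j) :
  lift (lift ord0 p) (lift ord0 l) = lift ord0 (lift p l) :> 'I_j.+2.
Proof.
apply: val_inj; rewrite /= /bump /=.
by rewrite !add1n ltnS addnS.
Qed.

Lemma gram_del n j (a : 'I_j.+2 -> pt n) (p : 'I_j.+1) :
  gram_mx (del a p) = \matrix_(l, m) gram_mx a (lift p l) (lift p m).
Proof.
apply/matrixP => l m; rewrite !mxE; apply: eq_bigr => i _.
by rewrite !mxE /del lift_lift0 !lift_lift1.
Qed.

Lemma inv_left j (Q G : 'M[rat]_j) : Q *m G = 1%:M -> G \in unitmx /\ invmx G = Q.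
Proof.
move=> QG; have [_ uG] := mulmx1_unit QG; split => //.
by rewrite -[LHS]mul1mx -QG -mulmxA mulmxV // mulmx1.
Qed.

Lemma acute_del n j (a : 'I_j.+2 -> pt n) (p : 'I_j.+1) :
  acute_tuple a -> acute_tuple (del a p).
Proof.
case=> uG neg pos; set G := gram_mx a in uG neg pos *; set Q := invmx G in neg pos *.
have QG : Q *m G = 1%:M by rewrite mulVmx.
have Qpp : 0 < Q p p.
  have := pos p; rewrite (bigD1_ord p) //=.
  have : \sum_(i < j) Q p (lift p i) <= 0.
    by apply: sumr_le0 => i _; apply: ltW; apply: neg; rewrite eq_liftF.
  lra.
have Qp0 : Q p p != 0 by rewrite gt_eqF.
have [uG' iG'] := inv_left (del_inv QG Qp0).
rewrite /acute_tuple gram_del iG'; split => //.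
  move=> l m lm; rewrite mxE.
  have h1 : Q (lift p l) p < 0 by apply: neg; rewrite lift_eqF.
  have h2 : Q p (lift p m) < 0 by apply: neg; rewrite eq_liftF.
  have h3 : Q (lift p l) (lift p m) < 0 by apply: neg; rewrite (inj_eq (@lift_inj _ p)).
  have : 0 < Q (lift p l) p * Q p (lift p m) / Q p p.
    by rewrite -[X in X / _]mulrNN; apply: divr_gt0 => //; apply: mulr_gt0; rewrite oppr_gt0.
  lra.
move=> l.
have h1 : Q (lift p l) p < 0 by apply: neg; rewrite lift_eqF.
have Hl := pos (lift p l); rewrite (bigD1_ord p) //= in Hl.
have Hp := pos p; rewrite (bigD1_ord p) //= in Hp.
have -> : \sum_(m < j) (\matrix_(l0, m0) (Q (lift p l0) (lift p m0) -
       Q (lift p l0) p * Q p (lift p m0) / Q p p)) l m =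
   \sum_(m < j) Q (lift p l) (lift p m) - Q (lift p l) p / Q p p * \sum_(m < j) Q p (lift p m).
  by rewrite mulr_sumr -sumrB; apply: eq_bigr => k _; rewrite mxE; field; rewrite Qp0.
set s1 := \sum_(m < j) Q (lift p l) (lift p m) in Hl *.
set s2 := \sum_(m < j) Q p (lift p m) in Hp *.
have -> : s1 - Q (lift p l) p / Q p p * s2 =
   (Q (lift p l) p + s1) + (- Q (lift p l) p) / Q p p * (Q p p + s2).
  by field.
apply: addr_gt0 => //; apply: mulr_gt0 => //; apply: divr_gt0 => //; by rewrite oppr_gt0.
Qed.

Lemma sum_ind j (F : 'I_j -> rat) m : \sum_(k < j) (k == m)%:R * F k = F m.
Proof.
rewrite (bigD1 m) //= eqxx mul1r big1 ?addr0 // => k /negbTE ->; by rewrite mul0r.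
Qed.

Definition Tm j (q : 'I_j) : 'M[rat]_j :=
  \matrix_(k, m) (if k == q then -1 else (k == m)%:R).

Lemma mulT_entry j (q : 'I_j) (X : 'M[rat]_j) k p :
  (Tm q *m X) k p = if k == q then - \sum_i X i p else X k p.
Proof.
rewrite mxE; case: ifP => kq.
  by rewrite -sumrN; apply: eq_bigr => i _; rewrite mxE kq mulN1r.
by rewrite -[RHS](sum_ind (fun i => X i p)); apply: eq_bigr => i _; rewrite mxE kq eq_sym.
Qed.

Lemma mulTt_entry j (q : 'I_j) (X : 'M[rat]_j) l m :
  (X *m (Tm q)^T) l m = if m == q then - \sum_p X l p else X l m.
Proof.
rewrite mxE; case: ifP => mq.
  by rewrite -sumrN; apply: eq_bigr => i _; rewrite !mxE mq mulrN1.
rewrite -[RHS](sum_ind (fun i => X l i)); apply: eq_bigr => i _; rewrite !mxE mq.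
by rewrite mulrC eq_sym.
Qed.

Lemma TT j (q : 'I_j) : Tm q *m Tm q = 1%:M.
Proof.
apply/matrixP => l m; rewrite mulT_entry [in RHS]mxE.
case: ifP => lq; last by rewrite mxE lq.
rewrite (eqP lq) (bigD1 q) //= mxE eqxx.
have [mq|mq] := eqVneq m q.
  rewrite mq big1 ?addr0 ?opprK // => i iq; rewrite mxE (negbTE iq).
  done.
rewrite (bigD1 m) /= ?mq // big1 ?mxE.
  by rewrite (negbTE mq) eqxx addr0 addrC subrr oppr0.
by move=> i /andP [iq im]; rewrite mxE (negbTE iq) (negbTE im).
Qed.

Definition swp n j (a : 'I_j.+1 -> pt n) (q : 'I_j) : 'I_j.+1 -> pt n :=
  fun i => a (tperm ord0 (lift ord0 q) i).

Lemma edge_swp n j (a : 'I_j.+1 -> pt n) (q : 'I_j) :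
  edge_mx (swp a q) = edge_mx a *m Tm q.
Proof.
apply/matrixP => i m; rewrite !mxE /swp tpermL.
have [->|mq] := eqVneq m q.
  rewrite tpermR.
  rewrite (eq_bigr (fun k => (k == q)%:R * - edge_mx a i k)); last first.
    by move=> k _; rewrite [Tm _ _ _]mxE; case: eqP => _; rewrite ?mulrN1 ?mul1r ?mulr0 ?mul0r.
  by rewrite sum_ind !mxE opprB.
rewrite tpermD; last 2 first.
- exact: neq_lift.
- by rewrite (inj_eq (@lift_inj _ _)) eq_sym.
rewrite (eq_bigr (fun k => (k == m)%:R * edge_mx a i k - (k == q)%:R * edge_mx a i k)); last first.
  move=> k _; rewrite [Tm _ _ _]mxE; case: (eqVneq k q) => [->|kq]; first by rewrite eq_sym (negbTE mq) mulrN1 mul0r mul1r add0r.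
  by rewrite mul0r subr0 mulrC.
rewrite sumrB !sum_ind !mxE; ring.
Qed.

Lemma gram_swp n j (a : 'I_j.+1 -> pt n) (q : 'I_j) :
  gram_mx (swp a q) = (Tm q)^T *m gram_mx a *m Tm q.
Proof. by rewrite /gram_mx edge_swp trmx_mul !mulmxA. Qed.

Lemma conj_inv j (T Q G : 'M[rat]_j) : Q *m G = 1%:M -> T *m T = 1%:M ->
  (T *m Q *m T^T) *m (T^T *m G *m T) = 1%:M.
Proof.
move=> QG TT1.
have TTt : T^T *m T^T = 1%:M by rewrite -trmx_mul TT1 trmx1.
have -> : T *m Q *m T^T *m (T^T *m G *m T) = T *m (Q *m (T^T *m T^T) *m G) *m T.
  by rewrite !mulmxA.
by rewrite TTt mulmx1 QG mulmx1 TT1.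
Qed.

Lemma acute_swp n j (a : 'I_j.+1 -> pt n) (q : 'I_j) :
  acute_tuple a -> acute_tuple (swp a q).
Proof.
case=> uG neg pos; set G := gram_mx a in uG neg pos *; set Q := invmx G in neg pos *.
have Gsym : G^T = G by rewrite /G /gram_mx trmx_mul trmxK.
have Qsym : forall x y, Q x y = Q y x.
  by move=> x y; have := trmx_inv G; rewrite Gsym => /matrixP/(_ y x); rewrite mxE.
have cr : forall p, \sum_i Q i p = \sum_i Q p i.
  by move=> p; apply: eq_bigr => i _; rewrite Qsym.
set T := Tm q.
have TTt : T^T *m T^T = 1%:M by rewrite -trmx_mul TT trmx1.
set Q' := T *m Q *m T^T.
have QG : Q' *m gram_mx (swp a q) = 1%:M.
  by rewrite gram_swp conj_inv // ?TT // /Q mulVmx.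
have [uG' iG'] := inv_left QG.
have Qe : forall l m, Q' l m = if m == q then - (if l == q then - \sum_p \sum_i Q i p
                                                  else \sum_p Q l p)
                              else (if l == q then - \sum_i Q i m else Q l m).
  move=> l m; rewrite /Q' mulTt_entry; case: ifP => _; last by rewrite mulT_entry.
  congr (- _); case: ifP => lq.
    by rewrite -sumrN; apply: eq_bigr => p _; rewrite mulT_entry lq.
  by apply: eq_bigr => p _; rewrite mulT_entry lq.
rewrite /acute_tuple iG'; split => //.
  move=> l m lm; rewrite Qe.
  case: (eqVneq m q) => [mq|mq].
    have lq : l != q by rewrite -mq.
    by rewrite (negbTE lq) oppr_lt0.
  case: (eqVneq l q) => [lq|lq]; last by apply: neg.
  by rewrite oppr_lt0 cr.
move=> l; rewrite (bigD1 q) //= Qe eqxx.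
have Hl := pos l; rewrite (bigD1 q) //= in Hl.
case: (eqVneq l q) => [lq|lq].
  rewrite [X in _ + X](eq_bigr (fun m => - \sum_i Q m i)); last first.
    by move=> m mq; rewrite Qe (negbTE mq) lq eqxx cr.
  rewrite opprK sumrN (bigD1 q) //= cr.
  rewrite [X in _ + X - _](eq_bigr (fun p => \sum_i Q p i)); last by move=> p _; rewrite cr.
  have := pos q; lra.
rewrite [X in _ + X](eq_bigr (fun m => Q l m)); last by move=> m mq; rewrite Qe (negbTE mq) (negbTE lq).
have : Q l q < 0 by apply: neg.
rewrite (bigD1 q) //=; lra.
Qed.

Lemma face_acute n j : forall (a : 'I_j.+1 -> pt n) (F : {set pt n}),
  injective a -> acute_tuple a -> F \subset [set a i | i in 'I_j.+1] ->
  F != set0 -> acute_simplex F.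
Proof.
elim: j => [|j IH] a F inj ac sub ne.
  case: (boolP ([set a i | i in 'I_1] \subset F)) => [hs|].
    by exists 0%N, a; split => //; apply/eqP; rewrite eqEsubset sub hs.
  case/subsetPn => x /imsetP [i _ ->] aiF.
  case/set0Pn: ne => y yF; have := subsetP sub y yF; case/imsetP => i' _ yi.
  by move: aiF; rewrite (ord1 i) -(ord1 i') -yi yF.
case: (boolP ([set a i | i in 'I_j.+2] \subset F)) => [hs|hns].
  by exists j.+1, a; split => //; apply/eqP; rewrite eqEsubset sub hs.
have [b [injb acb subb b0]] : exists b : 'I_j.+2 -> pt n,
    [/\ injective b, acute_tuple b, F \subset [set b i | i in 'I_j.+2] & b ord0 \in F].
  case: (boolP (a ord0 \in F)) => a0F; first by exists a.
  case/set0Pn: ne => y yF; have := subsetP sub y yF; case/imsetP => i' _ yi.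
  have : ord0 != i' by apply: contraNneq a0F => e; rewrite e -yi.
  case/unlift_some => q ei _; rewrite ei in yi.
  exists (swp a q); split.
  - by move=> x1 x2; rewrite /swp => /inj; apply: perm_inj.
  - exact: acute_swp.
  - apply/subsetP => x xF; have := subsetP sub x xF; case/imsetP => k _ ->.
    apply/imsetP; exists (tperm ord0 (lift ord0 q) k) => //.
    by rewrite /swp tpermK.
  - by rewrite /swp /= tpermL -yi.
case: (boolP ([set b i | i in 'I_j.+2] \subset F)) => [hs|hnb].
  by exists j.+1, b; split => //; apply/eqP; rewrite eqEsubset subb hs.
have [i _ bi] : exists2 i, i \in 'I_j.+2 & b i \notin F.
  by case/subsetPn: hnb => x /imsetP [k _ ->] bkF; exists k.
have : ord0 != i.
  by apply/eqP => e; move: bi; rewrite -e b0.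
case/unlift_some => p ip _.
apply: (IH (del b p)).
- by move=> x1 x2; rewrite /del => /injb /lift_inj.
- exact: acute_del.
- apply/subsetP => x xF; have := subsetP subb x xF; case/imsetP => k _ xk.
  have : lift ord0 p != k by apply: contraNneq bi => e; rewrite ip e -xk.
  case/unlift_some => k' ek _.
  by apply/imsetP; exists k' => //; rewrite xk ek.
- exact: ne.
Qed.

Theorem theorem5p12 (n k : nat) (S Shat : {set {ffun 'I_n -> bool}}) :
  acute_simplex S -> #|S| = k ->
  acute_simplex Shat -> S \subset Shat ->
  forall v, v \in Shat -> v \in S \/ in_An S v.
Proof.
move=> _ _ [j [a [inj -> ac]]] sub v vS.
case: (boolP (v \in S)) => vin; first by left.
right; split => //.
apply: (face_acute inj ac).
  by rewrite subUset sub1set vS sub.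
by apply/set0Pn; exists v; rewrite setU11.
Qed.
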